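(* Let $M$ be a matroid on a finite set $E(M)$ and $\lambda\colon E(M)\to\mathbb{N}$. Choose pairwise disjoint finite sets $E_e$ ($e\in E(M)$) with $\#E_e=\lambda(e)$ and $e\in E_e$, and put $E(M_\lambda)=\bigsqcup_{e\in E(M)}E_e$. Let $\mathcal{B}(M_\lambda)$ be the collection of all subsets $B\subseteq E(M_\lambda)$ for which there are a basis $B'$ of $M$ and elements $x_e\in E_e$ for each $e\in E(M)-B'$ such that $B=E(M_\lambda)-\{x_e : e\notin B'\}$. Then $\mathcal{B}(M_\lambda)$ is the set of bases of a matroid on $E(M_\lambda)$.
   Context: $\mathbb{N}$ denotes the positive integers. *)

(* Defs.v *)
From mathcomp Require Import all_boot.
Set Implicit Arguments. Unset Strict Implicit. Unset Printing Implicit Defensive.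

Definition is_matroid_bases (T : finType) (Bs : {set {set T}}) : Prop :=
  Bs != set0 /\
  forall B1 B2, B1 \in Bs -> B2 \in Bs ->
    forall x, x \in B1 :\: B2 ->
      exists2 y, y \in B2 :\: B1 & (B1 :\ x) :|: [set y] \in Bs.

(* The ground set E(M_lambda) is a finite type U
   together with p : U -> T, the fibre p^-1(e) being the block E_e. *)
Definition par_ext_bases (T U : finType) (p : U -> T) (Bs : {set {set T}})
  : {set {set U}} :=
  [set B : {set U} | [exists B' in Bs, exists x : {ffun T -> U},
      [forall e in ~: B', p (x e) == e] &&
      (B == ~: [set x e | e in ~: B'])]].

(* Main.v *)
Require Import Defs.
From mathcomp Require Import all_boot.

Lemma memX (T U : finType) (p : U -> T) (B' : {set T}) (x : T -> U) u :
  (forall e, e \in ~: B' -> p (x e) == e) ->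
  (u \in [set x e | e in ~: B']) = (p u \notin B') && (x (p u) == u).
Proof.
move=> Hx; apply/imsetP/andP.
  move=> [e He ->]; have /eqP -> := Hx e He.
  by rewrite -in_setC He.
move=> [Hu /eqP Hxu]; exists (p u) => //; by rewrite in_setC.
Qed.

Arguments memX {T U p B' x} u.

Theorem proposition3p3 (T U : finType) (Bs : {set {set T}})
  (lambda : T -> nat) (p : U -> T) (emb : T -> U) :
  is_matroid_bases Bs ->
  (forall e, 0 < lambda e) ->
  (forall e, #|[set u | p u == e]| = lambda e) ->
  (forall e, p (emb e) = e) ->
  is_matroid_bases (par_ext_bases p Bs).
Proof.
move=> [Bne Hex] _ _ pemb; split.
  have [B' HB'] := set0Pn _ Bne.
  apply/set0Pn; exists (~: [set [ffun e => emb e] e | e in ~: B']).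
  rewrite inE; apply/exists_inP; exists B' => //; apply/existsP.
  exists [ffun e => emb e]; rewrite eqxx andbT.
  by apply/forall_inP => e _; rewrite ffunE pemb.
move=> B1 B2; rewrite !inE.
move=> /exists_inP [B1' HB1' /existsP [x1 /andP [/forall_inP Hx1 /eqP ->]]].
move=> /exists_inP [B2' HB2' /existsP [x2 /andP [/forall_inP Hx2 /eqP ->]]].
move=> u; rewrite !inE (memX _ Hx1) (memX _ Hx2) negbK => /andP [/andP [HuB2 /eqP Hx2u] HuX1].
set e := p u.
pose x' := [ffun g => if g == e then u else x1 g].
have px1 g : g \notin B1' -> p (x1 g) = g.
  by move=> Hg; apply/eqP; apply: Hx1; rewrite in_setC.
have x'e : x' e = u by rewrite ffunE eqxx.
have x'g g : g != e -> x' g = x1 g by rewrite ffunE => /negbTE ->.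
case: (boolP (e \in B1')) => HeB1.
  have [f Hf HB''] : exists2 f, f \in B2' :\: B1' & B1' :\ e :|: [set f] \in Bs.
    by apply: (Hex _ _ HB1' HB2'); rewrite inE HuB2.
  move: Hf; rewrite inE => /andP [HfB1 HfB2].
  have Hfe : f != e by apply: contraNneq HfB1 => ->.
  have Hx' : forall g, g \in ~: (B1' :\ e :|: [set f]) -> p (x' g) == g.
    move=> g; rewrite !inE negb_or negb_and negbK => /andP [/orP [/eqP ->|Hg] Hgf].
      by rewrite x'e.
    have Hge : g != e by apply: contraNneq Hg => ->.
    by rewrite x'g // px1.
  exists (x1 f).
    by rewrite !inE (memX _ Hx1) (memX _ Hx2) px1 // HfB1 HfB2 eqxx.
  rewrite inE; apply/exists_inP; exists (B1' :\ e :|: [set f]) => //.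
  apply/existsP; exists x'; apply/andP; split; first by apply/forall_inP.
  apply/eqP/setP => w; rewrite !inE (memX _ Hx1) (memX _ Hx').
  rewrite !inE.
  case: (w =P u) => [->|Hwu] /=.
    rewrite x'e eqxx eqxx /= andbT.
    have -> : (u == x1 f) = false.
      by apply/negbTE; apply: contraNneq Hfe => Hu; move: Hu HeB1; rewrite /e => ->; rewrite px1 // => ->.
    by rewrite eq_sym (negbTE Hfe).
  case: (p w =P e) => [->|Hpwe].
    by rewrite HeB1 x'e (eq_sym u) (introF eqP Hwu) andbF.
  rewrite x'g; last by apply/eqP.
  rewrite /=.
  case: (p w =P f) => [Hpf|Hpf].
    rewrite Hpf HfB1 /= (eq_sym w) orbT /=; by case: (x1 f == w).
  have -> : (w == x1 f) = false.
    by apply/negbTE; apply/eqP => Hw; apply: Hpf; rewrite Hw px1 //.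
  by rewrite !orbF.
have Hx' : forall g, g \in ~: B1' -> p (x' g) == g.
  move=> g; rewrite in_setC => Hg.
  case: (g =P e) => [->|/eqP Hge]; first by rewrite x'e.
  by rewrite x'g // px1.
have Hx1e : x1 e != u.
  by move: HuX1; rewrite HeB1 /= => /negP Hn; apply/negP.
exists (x1 e).
  rewrite !inE (memX _ Hx1) (memX _ Hx2) px1 // HeB1 eqxx /=.
  by rewrite HuB2 /= Hx2u eq_sym Hx1e.
rewrite inE; apply/exists_inP; exists B1' => //.
apply/existsP; exists x'; apply/andP; split; first by apply/forall_inP.
apply/eqP/setP => w; rewrite !inE (memX _ Hx1) (memX _ Hx').
case: (w =P u) => [->|Hwu] /=.
  by rewrite x'e eqxx HeB1 /= eq_sym (negbTE Hx1e).
case: (p w =P e) => [->|Hpwe].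
  rewrite x'e HeB1 /= (eq_sym u) (introF eqP Hwu) (eq_sym w); by case: (x1 e == w).
rewrite x'g; last by apply/eqP.
have -> : (w == x1 e) = false.
  by apply/negbTE; apply/eqP => Hw; apply: Hpwe; rewrite Hw px1 //.
by rewrite orbF.
Qed.
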